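(* Let $g:\mathbb{R}\to\mathbb{R}$ be a periodic $C^1$ function of period $1$ with finitely many critical points in $[0,1]$. Then there exist a constant $C>0$ and, for every $\epsilon>0$, a number $\delta=\delta(\epsilon)>0$ with $\delta(\epsilon)\to 0$ as $\epsilon\to0$, such that for every $\epsilon>0$ the set $$A=\{(x,y)\in[0,1]^2 : |g(x)-g(y)|<\epsilon\}$$ can be covered by $N\le C/\delta$ squares with horizontal and vertical sides of length $\delta$.
   Context: A critical point of $g$ is a point where $g'$ vanishes. *)

(* Defs.v *)
From Stdlib Require Import Reals List.
From Coquelicot Require Import Coquelicot.
Open Scope R_scope.

Definition periodic1 (g : R -> R) : Prop := forall x, g (x + 1) = g x.

Definition is_C1 (g : R -> R) : Prop :=
  (forall x, ex_derive g x) /\ (forall x, continuous (Derive g) x).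

Definition critical_point (g : R -> R) (x : R) : Prop := Derive g x = 0.

Definition finitely_many_critical_points_01 (g : R -> R) : Prop :=
  exists l : list R, forall x, 0 <= x <= 1 -> critical_point g x -> In x l.

Definition in_square (d : R) (c : R * R) (p : R * R) : Prop :=
  fst c <= fst p <= fst c + d /\ snd c <= snd p <= snd c + d.

(* Main.v *)
Require Import Defs.
From Stdlib Require Import Reals List Lra Lia Classical ClassicalDescription.
From Coquelicot Require Import Coquelicot.
Open Scope R_scope.

Fixpoint sumn (f : nat -> nat) (n : nat) : nat :=
  match n with O => O | S n => (sumn f n + f n)%nat end.

Definition rowc (f : nat -> bool) m := sumn (fun j => if f j then 1%nat else 0%nat) m.
Definition cnt (b : nat -> nat -> bool) n m := sumn (fun i => rowc (b i) m) n.

Lemma len_flat_seq {B} (F : nat -> list B) n :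
  length (flat_map F (seq 0 n)) = sumn (fun i => length (F i)) n.
Proof.
  induction n. simpl; auto.
  rewrite seq_S, flat_map_app, length_app. simpl sumn. rewrite <- IHn. simpl. rewrite app_nil_r. lia.
Qed.

Lemma rowc_mono f m m' : (m <= m')%nat -> (rowc f m <= rowc f m')%nat.
Proof.
  induction 1; auto. unfold rowc in *; simpl. lia.
Qed.

Lemma rowc_cut f k m : (forall j, (k <= j)%nat -> f j = false) -> (rowc f m <= rowc f k)%nat.
Proof.
  intros H; induction m. unfold rowc; simpl; lia.
  destruct (Nat.lt_ge_cases m k).
  - apply rowc_mono; lia.
  - unfold rowc in *; simpl sumn. rewrite (H m); lia.
Qed.

Lemma rowc_low f nu m : (forall j, (j < nu)%nat -> f j = false) -> (rowc f m <= m - nu)%nat.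
Proof.
  intros H; induction m. unfold rowc; simpl; lia.
  unfold rowc in *; simpl sumn. destruct (Nat.lt_ge_cases m nu).
  - rewrite (H m); lia.
  - destruct (f m); lia.
Qed.

Lemma cnt_cut b n k m : (forall i j, (i < n)%nat -> (k <= j)%nat -> b i j = false) ->
  (cnt b n m <= cnt b n k)%nat.
Proof.
  intros H; induction n. unfold cnt; simpl; lia.
  unfold cnt in *; simpl.
  assert (rowc (b n) m <= rowc (b n) k)%nat by (apply rowc_cut; intros; apply H; lia).
  assert (sumn (fun i => rowc (b i) m) n <= sumn (fun i => rowc (b i) k) n)%nat
    by (apply IHn; intros; apply H; lia).
  lia.
Qed.

Lemma find_min (f : nat -> bool) m : exists nu, (nu <= m)%nat /\ (forall j, (j < nu)%nat -> f j = false)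
  /\ ((nu < m)%nat -> f nu = true).
Proof.
  induction m. exists 0%nat; repeat split; intros; lia.
  destruct IHm as [nu [H1 [H2 H3]]].
  destruct (Nat.lt_ge_cases nu m).
  - exists nu; repeat split; auto; lia.
  - assert (nu = m) by lia; subst.
    destruct (f m) eqn:E.
    + exists m; repeat split; auto.
    + exists (S m); repeat split; try lia. intros j Hj.
      destruct (Nat.lt_ge_cases j m); auto. replace j with m by lia; auto.
Qed.

Lemma cnt_bound (b : nat -> nat -> bool) :
  (forall i i' j j', (i < i')%nat -> b i j = true -> b i' j' = true -> (j <= j' + 2)%nat) ->
  forall n m, (cnt b n m <= m + 3 * n)%nat.
Proof.
  intros Hp n; induction n; intros m. unfold cnt; simpl; lia.
  unfold cnt; simpl. fold (cnt b n m).
  destruct (find_min (b n) m) as [nu [H1 [H2 H3]]].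
  pose proof (rowc_low (b n) nu m H2).
  destruct (Nat.lt_ge_cases nu m).
  - assert (cnt b n m <= cnt b n (nu + 3))%nat.
    { apply cnt_cut. intros i j Hi Hj. destruct (b i j) eqn:E; auto.
      pose proof (Hp i n j nu Hi E (H3 H0)). lia. }
    pose proof (IHn (nu+3)%nat). lia.
  - pose proof (IHn m). lia.
Qed.

Lemma C1_cont g : is_C1 g -> forall x, continuity_pt g x.
Proof.
  intros [H1 H2] x. apply continuity_pt_filterlim. apply (ex_derive_continuous (K:=R_AbsRing) (V:=R_NormedModule)), H1.
Qed.

Lemma C1_dcont g : is_C1 g -> continuity (Derive g).
Proof.
  intros [H1 H2] x. apply continuity_pt_filterlim. apply H2.
Qed.

Lemma sign_const g a b : is_C1 g -> (forall z, a < z < b -> Derive g z <> 0) ->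
  (forall z, a < z < b -> 0 < Derive g z) \/ (forall z, a < z < b -> Derive g z < 0).
Proof.
  intros HC Hn.
  destruct (classic (forall z, a < z < b -> 0 < Derive g z)) as [H|H]; [left; auto|right].
  intros z Hz.
  destruct (Rlt_le_dec (Derive g z) 0) as [Hl|Hl]; auto. exfalso.
  apply H. intros w Hw.
  destruct (Rlt_le_dec 0 (Derive g w)) as [Hw'|Hw']; auto. exfalso.
  assert (Derive g w < 0) by (pose proof (Hn w Hw); lra).
  assert (Derive g z > 0) by (pose proof (Hn z Hz); lra).
  destruct (IVT_gen (Derive g) z w 0 (C1_dcont g HC)) as [c [Hc1 Hc2]].
  { unfold Rmin, Rmax; destruct Rle_dec; lra. }
  apply (Hn c); auto.
  unfold Rmin, Rmax in Hc1; destruct Rle_dec; split; lra.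
Qed.

Definition sgn g (p : R * R) : R :=
  if Rlt_dec 0 (Derive g ((fst p + snd p)/2)) then 1 else -1.

Lemma sgn_pm g p : sgn g p = 1 \/ sgn g p = -1.
Proof. unfold sgn; destruct Rlt_dec; auto. Qed.

Lemma piece_mono g p : is_C1 g -> (forall z, fst p < z < snd p -> Derive g z <> 0) ->
  forall u v, fst p <= u -> u < v -> v <= snd p -> sgn g p * g u < sgn g p * g v.
Proof.
  intros HC Hn u v H1 H2 H3.
  destruct (MVT_cor2 g (Derive g) u v H2) as [c [Hc1 Hc2]].
  { intros c _. apply is_derive_Reals. apply Derive_correct. apply HC. }
  assert (Hm : fst p < (fst p + snd p)/2 < snd p) by lra.
  unfold sgn.
  destruct (sign_const g (fst p) (snd p) HC Hn) as [Hs|Hs].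
  - destruct Rlt_dec as [_|Hf]; [|exfalso; apply Hf, Hs, Hm].
    assert (0 < Derive g c) by (apply Hs; lra).
    assert (0 < Derive g c * (v - u)) by (apply Rmult_lt_0_compat; lra). lra.
  - destruct Rlt_dec as [Hf|_]; [pose proof (Hs _ Hm); lra|].
    assert (Derive g c < 0) by (apply Hs; lra).
    assert (0 < - Derive g c * (v - u)) by (apply Rmult_lt_0_compat; lra). lra.
Qed.

Lemma Rabs_sgn g p t : Rabs (sgn g p * t) = Rabs t.
Proof. rewrite Rabs_mult. destruct (sgn_pm g p) as [E|E]; rewrite E; [rewrite Rabs_R1|rewrite (Rabs_left (-1)) by lra]; ring. Qed.

Lemma unif_piece g p : is_C1 g -> (forall z, fst p < z < snd p -> Derive g z <> 0) ->
  forall eta, 0 < eta -> exists e, 0 < e /\ forall y y', fst p <= y <= snd p -> fst p <= y' <= snd p ->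
    Rabs (g y - g y') < e -> Rabs (y - y') <= eta.
Proof.
  intros HC Hn eta Heta.
  set (a := fst p) in *; set (b := snd p) in *.
  destruct (Rle_dec (b - a) eta) as [Hs|Hs].
  { exists 1; split; [lra|]. intros y y' Hy Hy' _. apply Rabs_le; lra. }
  set (s := sgn g p).
  set (h := fun z => s * (g (z + eta) - g z)).
  destruct (continuity_ab_min h a (b - eta)) as [zm [Hm1 Hm2]]. lra.
  { intros c _. unfold h. apply continuity_pt_mult. apply continuity_pt_const; intros ? ?; auto.
    apply continuity_pt_minus; [|apply C1_cont; auto].
    apply (continuity_pt_comp (fun z => z + eta) g).
    apply continuity_pt_plus. apply derivable_continuous_pt, derivable_pt_id.
    apply continuity_pt_const; intros ? ?; auto. apply C1_cont; auto. }
  exists (h zm). split.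
  { unfold h, s. pose proof (piece_mono g p HC Hn zm (zm + eta)). fold a b in H. lra. }
  assert (Hmono : forall u v, a <= u -> u <= v -> v <= b -> s * g u <= s * g v).
  { intros u v H1 H2 H3. destruct (Req_dec u v) as [->|Hne]; [lra|].
    apply Rlt_le. apply (piece_mono g p HC Hn); fold a b; lra. }
  assert (Key : forall y y', a <= y -> y + eta < y' -> y' <= b -> h zm <= Rabs (g y - g y')).
  { intros y y' H1 H2 H3. pose proof (Hm1 y ltac:(lra)).
    pose proof (Hmono (y + eta) y' ltac:(lra) ltac:(lra) ltac:(lra)).
    unfold h in H. rewrite Rabs_minus_sym, <- (Rabs_sgn g p (g y' - g y)). fold s.
    apply Rle_trans with (s * (g y' - g y)); [unfold h in *; rewrite !Rmult_minus_distr_l in *; lra|].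
    apply RRle_abs. }
  intros y y' Hy Hy' Hlt.
  destruct (Rle_dec (Rabs (y - y')) eta) as [|Hf]; auto. exfalso.
  apply Rnot_le_lt in Hf.
  destruct (Rle_dec y y').
  - rewrite Rabs_minus_sym, Rabs_right in Hf by lra.
    pose proof (Key y y' ltac:(lra) ltac:(lra) ltac:(lra)). lra.
  - rewrite Rabs_right in Hf by lra.
    pose proof (Key y' y ltac:(lra) ltac:(lra) ltac:(lra)). rewrite Rabs_minus_sym in H. lra.
Qed.

Definition piece_ok g (p : R * R) := 0 <= fst p <= snd p /\ snd p <= 1 /\
  forall z, fst p < z < snd p -> Derive g z <> 0.

Lemma pieces g l : forall a b, 0 <= a -> a <= b -> b <= 1 ->
  (forall x, a < x < b -> critical_point g x -> In x l) ->
  exists pcs, (length pcs <= 2 ^ length l)%nat /\ (forall p, In p pcs -> piece_ok g p) /\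
    forall x, a <= x <= b -> exists p, In p pcs /\ fst p <= x <= snd p.
Proof.
  induction l as [|c l IH]; intros a b H0 H1 H2 Hc.
  - exists ((a,b) :: nil). simpl. split; [lia|split].
    + intros p [<-|[]]. unfold piece_ok; simpl; repeat split; try lra.
      intros z Hz E. apply (Hc z Hz E).
    + intros x Hx. exists (a,b); simpl; auto.
  - destruct (classic (a < c < b)) as [Hin|Hout].
    + destruct (IH a c) as [p1 [L1 [O1 C1]]]; try lra.
      { intros x Hx E. destruct (Hc x ltac:(lra) E) as [->|]; auto. lra. }
      destruct (IH c b) as [p2 [L2 [O2 C2]]]; try lra.
      { intros x Hx E. destruct (Hc x ltac:(lra) E) as [->|]; auto. lra. }
      exists (p1 ++ p2). split; [rewrite length_app; simpl; lia|split].
      * intros p Hp. apply in_app_or in Hp as [|]; auto.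
      * intros x Hx. destruct (Rle_dec x c).
        -- destruct (C1 x ltac:(lra)) as [p [? ?]]. exists p; split; auto; apply in_or_app; auto.
        -- destruct (C2 x ltac:(lra)) as [p [? ?]]. exists p; split; auto; apply in_or_app; auto.
    + destruct (IH a b) as [p1 [L1 [O1 C1]]]; try lra.
      { intros x Hx E. destruct (Hc x Hx E) as [->|]; auto. contradiction. }
      exists p1. split; auto. simpl. lia.
Qed.

Lemma unif_list g pcs : is_C1 g -> (forall p, In p pcs -> piece_ok g p) ->
  forall eta, 0 < eta -> exists e, 0 < e /\ forall p y y', In p pcs ->
    fst p <= y <= snd p -> fst p <= y' <= snd p ->
    Rabs (g y - g y') < e -> Rabs (y - y') <= eta.
Proof.
  intros HC. induction pcs as [|p pcs IH]; intros Hok eta Heta.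
  - exists 1; split; [lra|]. intros ? ? ? [].
  - destruct (IH (fun q Hq => Hok q (or_intror Hq)) eta Heta) as [e1 [He1 H1]].
    destruct (unif_piece g p HC (proj2 (proj2 (Hok p (or_introl eq_refl)))) eta Heta) as [e2 [He2 H2]].
    exists (Rmin e1 e2). split. apply Rmin_pos; auto.
    intros q y y' [<-|Hq] Hy Hy' Hlt.
    + apply H2; auto. pose proof (Rmin_r e1 e2); lra.
    + apply (H1 q); auto. pose proof (Rmin_l e1 e2); lra.
Qed.

Lemma abs_s g p u v : Rabs (sgn g p * g u - sgn g p * g v) = Rabs (g u - g v).
Proof. rewrite <- Rmult_minus_distr_l. apply Rabs_sgn. Qed.

Lemma mono_w g p : is_C1 g -> piece_ok g p -> forall u v, fst p <= u -> u <= v -> v <= snd p ->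
  sgn g p * g u <= sgn g p * g v.
Proof.
  intros HC Hp u v H1 H2 H3. destruct (Req_dec u v) as [->|]; [lra|].
  apply Rlt_le, piece_mono; auto; [apply Hp|lra].
Qed.

Lemma core g P Q eps d x x' y y' : 0 <= d -> is_C1 g -> piece_ok g P -> piece_ok g Q ->
  (forall y y', fst Q <= y <= snd Q -> fst Q <= y' <= snd Q -> Rabs (g y - g y') < 2 * eps ->
     Rabs (y - y') <= d) ->
  fst P <= x -> x <= x' -> x' <= snd P -> fst Q <= y <= snd Q -> fst Q <= y' <= snd Q ->
  Rabs (g x - g y) < eps -> Rabs (g x' - g y') < eps ->
  (sgn g P = sgn g Q -> y <= y' + d) /\ (sgn g P <> sgn g Q -> y' <= y + d).
Proof.
  intros Hd HC HP HQ Gd H1 H2 H3 Hy Hy' E1 E2.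
  pose proof (mono_w g P HC HP x x' H1 H2 H3) as Mx.
  rewrite <- (abs_s g P) in E1, E2.
  set (s := sgn g P) in *.
  split; intros Hs.
  - destruct (Rle_dec y y') as [|Hlt]; [lra|]. apply Rnot_le_lt in Hlt.
    pose proof (piece_mono g Q HC (proj2 (proj2 HQ)) y' y ltac:(lra) Hlt ltac:(lra)).
    rewrite <- Hs in H. fold s in H.
    assert (Rabs (g y - g y') < 2 * eps).
    { rewrite <- (abs_s g P). fold s.
      apply Rabs_def2 in E1; apply Rabs_def2 in E2. apply Rabs_def1; lra. }
    pose proof (Gd y y' Hy Hy' H0). apply Rabs_le_between in H4. lra.
  - destruct (Rle_dec y' y) as [|Hlt]; [lra|]. apply Rnot_le_lt in Hlt.
    pose proof (piece_mono g Q HC (proj2 (proj2 HQ)) y y' ltac:(lra) Hlt ltac:(lra)).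
    assert (sgn g Q = - s).
    { destruct (sgn_pm g P), (sgn_pm g Q); unfold s in *; lra. }
    rewrite H0 in H. rewrite !Ropp_mult_distr_l_reverse in H.
    assert (Rabs (g y - g y') < 2 * eps).
    { rewrite <- (abs_s g P). fold s.
      apply Rabs_def2 in E1; apply Rabs_def2 in E2. apply Rabs_def1; lra. }
    pose proof (Gd y y' Hy Hy' H4). apply Rabs_le_between in H5. lra.
Qed.

Lemma sumn_ext f f' n : (forall i, f i = f' i) -> sumn f n = sumn f' n.
Proof. intros H; induction n; simpl; [auto|rewrite IHn, H; auto]. Qed.

Lemma len_flat_bound {A B} (f : A -> list B) l k :
  (forall a, In a l -> (length (f a) <= k)%nat) -> (length (flat_map f l) <= length l * k)%nat.
Proof.
  induction l; intros H; simpl; auto. rewrite length_app.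
  pose proof (H a (or_introl eq_refl)). pose proof (IHl (fun x Hx => H x (or_intror Hx))). lia.
Qed.

Lemma floor_ex t : 0 <= t -> exists k : nat, INR k <= t < INR k + 1.
Proof. intros H. destruct (nfloor_ex t H) as [k Hk]. exists k; auto. Qed.

Lemma nat_of_real j j' : INR j <= INR j' + 2 -> (j <= j' + 2)%nat.
Proof. intros H. apply INR_le. rewrite plus_INR. simpl. lra. Qed.

Lemma grid g pcs eps d N : is_C1 g -> (forall p, In p pcs -> piece_ok g p) ->
  (forall x, 0 <= x <= 1 -> exists p, In p pcs /\ fst p <= x <= snd p) ->
  0 < eps -> 0 < d -> d <= 1 ->
  (forall p y y', In p pcs -> fst p <= y <= snd p -> fst p <= y' <= snd p ->
     Rabs (g y - g y') < 2 * eps -> Rabs (y - y') <= d) ->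
  / d < INR N -> INR N <= / d + 1 ->
  exists squares : list (R * R),
    INR (length squares) <= 8 * INR (length pcs * length pcs) / d /\
    forall x y, 0 <= x <= 1 -> 0 <= y <= 1 -> Rabs (g x - g y) < eps ->
      exists c, In c squares /\ in_square d c (x, y).
Proof.
  intros HC Hok Hcov Heps Hd Hd1 Gd HN1 HN2.
  set (rc := fun (PQ : (R*R)*(R*R)) (j : nat) =>
    if Req_EM_T (sgn g (fst PQ)) (sgn g (snd PQ)) then INR j * d else 1 - (INR j + 1) * d).
  set (Gdp := fun (PQ : (R*R)*(R*R)) (i j : nat) => exists x y,
    fst (fst PQ) <= x <= snd (fst PQ) /\ fst (snd PQ) <= y <= snd (snd PQ) /\
    INR i * d <= x <= INR i * d + d /\ rc PQ j <= y <= rc PQ j + d /\ Rabs (g x - g y) < eps).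
  set (gb := fun PQ i j => if excluded_middle_informative (Gdp PQ i j) then true else false).
  set (sq := fun PQ => flat_map (fun i => flat_map (fun j => if gb PQ i j then (INR i * d, rc PQ j) :: nil else nil)
       (seq 0 N)) (seq 0 N)).
  exists (flat_map sq (list_prod pcs pcs)). split.
  - assert (Hl : (length (flat_map sq (list_prod pcs pcs)) <= length pcs * length pcs * (4 * N))%nat).
    { rewrite <- length_prod. apply len_flat_bound. intros [P Q] HPQ.
      apply in_prod_iff in HPQ as [HP HQ].
      unfold sq. rewrite len_flat_seq.
      replace (sumn _ N) with (cnt (gb (P,Q)) N N).
      2:{ unfold cnt. apply sumn_ext. intros i. rewrite len_flat_seq. unfold rowc. apply sumn_ext.
          intros j. destruct (gb (P,Q) i j); reflexivity. }
      assert (cnt (gb (P, Q)) N N <= N + 3 * N)%nat; [|lia].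
      apply cnt_bound. intros i i' j j' Hii Hb Hb'.
      unfold gb in Hb, Hb'.
      destruct (excluded_middle_informative (Gdp (P,Q) i j)) as [[x [y [Hx [Hy [Hxi [Hyj E]]]]]]|]; [|discriminate].
      destruct (excluded_middle_informative (Gdp (P,Q) i' j')) as [[x' [y' [Hx' [Hy' [Hxi' [Hyj' E']]]]]]|]; [|discriminate].
      simpl in *.
      assert (INR (S i) <= INR i') by (apply le_INR; lia). rewrite S_INR in H.
      assert (x <= x') by nra.
      destruct (core g P Q eps d x x' y y' ltac:(lra) HC (Hok P HP) (Hok Q HQ)
        (fun y y' => Gd Q y y' HQ) ltac:(lra) H0 ltac:(lra) Hy Hy' E E') as [C1 C2].
      unfold rc in Hyj, Hyj'; simpl in Hyj, Hyj'.
      apply nat_of_real.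
      destruct (Req_EM_T (sgn g P) (sgn g Q)) as [Hs|Hs].
      + specialize (C1 Hs).
        assert (INR j * d <= (INR j' + 2) * d) by lra.
        apply Rmult_le_reg_r in H1; lra.
      + specialize (C2 Hs).
        assert (INR j * d <= (INR j' + 2) * d) by lra.
        apply Rmult_le_reg_r in H1; lra. }
    apply le_INR in Hl. rewrite !mult_INR in Hl. rewrite mult_INR.
    assert (/ d >= 1). { rewrite <- Rinv_1. apply Rle_ge, Rinv_le_contravar; lra. }
    assert (0 <= INR (length pcs) * INR (length pcs)) by (apply Rmult_le_pos; apply pos_INR).
    unfold Rdiv. apply Rle_trans with (1 := Hl). simpl (INR 4).
    assert (INR N <= 2 * / d) by lra.
    nra.
  - intros x y Hx Hy E.
    destruct (Hcov x Hx) as [P [HP HxP]]. destruct (Hcov y Hy) as [Q [HQ HyQ]].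
    assert (Hxd : 0 <= x / d) by (apply Rdiv_le_0_compat; lra).
    destruct (floor_ex (x / d) Hxd) as [i Hi].
    assert (Hxi : INR i * d <= x <= INR i * d + d).
    { split. apply Rmult_le_reg_r with (/ d). apply Rinv_0_lt_compat; lra.
      rewrite Rmult_assoc, Rinv_r, Rmult_1_r by lra. apply Hi.
      apply Rmult_le_reg_r with (/ d). apply Rinv_0_lt_compat; lra.
      replace ((INR i * d + d) * / d) with (INR i + 1) by (field; lra). unfold Rdiv in Hi. lra. }
    assert (HiN : (i < N)%nat).
    { apply INR_lt. apply Rle_lt_trans with (/ d); [|lra].
      apply Rle_trans with (x / d); [lra|]. unfold Rdiv.
      rewrite <- (Rmult_1_l (/ d)) at 2. apply Rmult_le_compat_r; [apply Rlt_le, Rinv_0_lt_compat|]; lra. }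
    assert (Hj : exists j, (j < N)%nat /\ rc (P,Q) j <= y <= rc (P,Q) j + d).
    { unfold rc; simpl.
      destruct (Req_EM_T (sgn g P) (sgn g Q)).
      - assert (Hyd : 0 <= y / d) by (apply Rdiv_le_0_compat; lra).
        destruct (floor_ex (y / d) Hyd) as [j Hj]. exists j. split.
        + apply INR_lt. apply Rle_lt_trans with (/ d); [|lra].
          apply Rle_trans with (y / d); [lra|]. unfold Rdiv.
          rewrite <- (Rmult_1_l (/ d)) at 2. apply Rmult_le_compat_r; [apply Rlt_le, Rinv_0_lt_compat|]; lra.
        + split. apply Rmult_le_reg_r with (/ d). apply Rinv_0_lt_compat; lra.
          rewrite Rmult_assoc, Rinv_r, Rmult_1_r by lra. apply Hj.
          apply Rmult_le_reg_r with (/ d). apply Rinv_0_lt_compat; lra.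
          replace ((INR j * d + d) * / d) with (INR j + 1) by (field; lra). unfold Rdiv in Hj. lra.
      - assert (Hyd : 0 <= (1 - y) / d) by (apply Rdiv_le_0_compat; lra).
        destruct (floor_ex ((1 - y) / d) Hyd) as [j Hj]. exists j. split.
        + apply INR_lt. apply Rle_lt_trans with (/ d); [|lra].
          apply Rle_trans with ((1 - y) / d); [lra|]. unfold Rdiv.
          rewrite <- (Rmult_1_l (/ d)) at 2. apply Rmult_le_compat_r; [apply Rlt_le, Rinv_0_lt_compat|]; lra.
        + assert (INR j * d <= 1 - y < INR j * d + d).
          { split. apply Rmult_le_reg_r with (/ d). apply Rinv_0_lt_compat; lra.
            rewrite Rmult_assoc, Rinv_r, Rmult_1_r by lra. apply Hj.
            apply Rmult_lt_reg_r with (/ d). apply Rinv_0_lt_compat; lra.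
            replace ((INR j * d + d) * / d) with (INR j + 1) by (field; lra). unfold Rdiv in Hj. lra. }
          lra. }
    destruct Hj as [j [HjN Hyj]].
    exists (INR i * d, rc (P,Q) j). split.
    + apply in_flat_map. exists (P,Q). split. apply in_prod; auto.
      unfold sq. apply in_flat_map. exists i. split. apply in_seq; lia.
      apply in_flat_map. exists j. split. apply in_seq; lia.
      unfold gb. destruct (excluded_middle_informative (Gdp (P,Q) i j)) as [_|Hn].
      * left; auto.
      * exfalso; apply Hn. exists x, y. simpl. repeat split; try lra; apply HyQ || apply HxP || auto.
    + unfold in_square; simpl. lra.
Qed.

Theorem lemma2p1 (g : R -> R) :
  periodic1 g -> is_C1 g -> finitely_many_critical_points_01 g ->
  exists (C : R) (delta : R -> R),
    0 < C /\
    (forall eps, 0 < eps -> 0 < delta eps) /\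
    (forall eta, 0 < eta -> exists eps0, 0 < eps0 /\
        forall eps, 0 < eps < eps0 -> delta eps < eta) /\
    (forall eps, 0 < eps ->
       exists squares : list (R * R),
         INR (length squares) <= C / delta eps /\
         forall x y, 0 <= x <= 1 -> 0 <= y <= 1 -> Rabs (g x - g y) < eps ->
           exists c, In c squares /\ in_square (delta eps) c (x, y)).
Proof.
  intros _ HC [l Hl].
  destruct (pieces g l 0 1) as [pcs [_ [Hok Hcov]]]; try lra.
  { intros x Hx E. apply Hl; auto; lra. }
  set (E := fun eps d => d = 0 \/ exists p y y', In p pcs /\ fst p <= y <= snd p /\
     fst p <= y' <= snd p /\ Rabs (g y - g y') < 2 * eps /\ d = Rabs (y - y')).
  assert (Hbd : forall p y y', In p pcs -> fst p <= y <= snd p -> fst p <= y' <= snd p -> Rabs (y - y') <= 1).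
  { intros p y y' Hp Hy Hy'. destruct (Hok p Hp) as [[H1 H2] [H3 _]]. apply Rabs_le; lra. }
  assert (HB : forall eps, bound (E eps)).
  { intros eps. exists 1. intros d [->|[p [y [y' [Hp [Hy [Hy' [_ ->]]]]]]]]; [lra|eauto]. }
  assert (HN : forall eps, exists d, E eps d) by (intros; exists 0; left; auto).
  set (lub := fun eps => proj1_sig (completeness (E eps) (HB eps) (HN eps))).
  assert (Hlub : forall eps, is_lub (E eps) (lub eps)) by (intros; unfold lub; destruct completeness; auto).
  assert (Hlub0 : forall eps, 0 <= lub eps) by (intros eps; apply (proj1 (Hlub eps)); left; auto).
  exists (8 * INR (length pcs * length pcs) + 1), (fun eps => Rmin 1 (lub eps + eps)).
  split; [|split; [|split]].
  - pose proof (pos_INR (length pcs * length pcs)). lra.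
  - intros eps He. apply Rmin_pos; [lra|]. pose proof (Hlub0 eps); lra.
  - intros eta Heta.
    destruct (unif_list g pcs HC Hok (eta / 2) ltac:(lra)) as [e [He Hu]].
    exists (Rmin (e / 2) (eta / 2)). split. apply Rmin_pos; lra.
    intros eps [He1 He2].
    pose proof (Rmin_l (e/2) (eta/2)). pose proof (Rmin_r (e/2) (eta/2)).
    assert (lub eps <= eta / 2).
    { apply (proj2 (Hlub eps)). intros d [->|[p [y [y' [Hp [Hy [Hy' [Hg ->]]]]]]]]; [lra|].
      apply (Hu p); auto. lra. }
    pose proof (Rmin_r 1 (lub eps + eps)). lra.
  - intros eps He.
    set (d := Rmin 1 (lub eps + eps)).
    assert (Hd : 0 < d) by (apply Rmin_pos; [lra|]; pose proof (Hlub0 eps); lra).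
    assert (Hd1 : d <= 1) by apply Rmin_l.
    destruct (floor_ex (/ d)) as [k Hk]. apply Rlt_le, Rinv_0_lt_compat; auto.
    destruct (grid g pcs eps d (S k) HC Hok Hcov He Hd Hd1) as [sqs [Hlen Hc]].
    { intros p y y' Hp Hy Hy' Hg. unfold d. apply Rmin_glb. eauto.
      apply Rle_trans with (lub eps); [|lra]. apply (proj1 (Hlub eps)). right.
      exists p, y, y'; repeat split; auto; lra. }
    { rewrite S_INR; lra. }
    { rewrite S_INR; lra. }
    exists sqs. split; auto. apply Rle_trans with (1 := Hlen).
    unfold Rdiv. apply Rmult_le_compat_r. apply Rlt_le, Rinv_0_lt_compat; auto. lra.
Qed.
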